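(* Let $X$ be a Banach lattice and $P\colon X\to X$ a strictly positive projection. If the only closed ideals $J$ of $X$ with $P(J)\subseteq J$ are $\{0\}$ and $X$, then $P$ has rank $1$.
   Context: A projection $P$ ($P^2=P$, linear) on a vector lattice is strictly positive if $x>0$ implies $Px>0$. *)

(* Defs.v *)
From HB Require Import structures.
From mathcomp Require Import all_boot all_order all_algebra.
From mathcomp Require Import all_classical all_reals all_analysis.
Set Implicit Arguments. Unset Strict Implicit. Unset Printing Implicit Defensive.
Import Order.TTheory GRing.Theory Num.Theory.
Import numFieldNormedType.Exports.
Local Open Scope classical_set_scope.
Local Open Scope ring_scope.

Section BanachLattice.
Variables (R : realType) (V : completeNormedModType R).

Definition vector_lattice (le : V -> V -> Prop) (join : V -> V -> V) : Prop :=
  [/\ (forall x, le x x) /\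
      (forall x y, le x y -> le y x -> x = y),
      (forall x y z, le x y -> le y z -> le x z),
      (forall x y z, le x y -> le (x + z) (y + z)),
      (forall (a : R) x y, 0 <= a -> le x y -> le (a *: x) (a *: y)) &
      (forall x y, [/\ le x (join x y), le y (join x y) &
                    forall z, le x z -> le y z -> le (join x y) z])].

Definition labs (join : V -> V -> V) (x : V) : V := join x (- x).

Definition banach_lattice (le : V -> V -> Prop) (join : V -> V -> V) : Prop :=
  vector_lattice le join /\
  (forall x y, le (labs join x) (labs join y) -> `|x| <= `|y|).

Definition lpos (le : V -> V -> Prop) (x : V) : Prop := le 0 x /\ x <> 0.

Definition strictly_positive (le : V -> V -> Prop) (P : V -> V) : Prop :=
  forall x, lpos le x -> lpos le (P x).

Definition projection (P : {linear V -> V}) : Prop := forall x, P (P x) = P x.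

Definition lattice_ideal (le : V -> V -> Prop) (join : V -> V -> V)
  (J : set V) : Prop :=
  [/\ J 0,
      (forall x y, J x -> J y -> J (x + y)),
      (forall (a : R) x, J x -> J (a *: x)) &
      (forall x y, J x -> le (labs join y) (labs join x) -> J y)].

Definition rank_one (P : V -> V) : Prop :=
  exists u : V, u <> 0 /\ range P = [set a *: u | a in [set: R]].

End BanachLattice.

(* Main.v *)
From HB Require Import structures.
From mathcomp Require Import all_boot all_order all_algebra.
From mathcomp Require Import all_classical all_reals all_analysis.
Require Import Defs.
From mathcomp Require Import ring lra.
Import Order.TTheory GRing.Theory Num.Theory.
Import numFieldNormedType.Exports.
Local Open Scope classical_set_scope.
Local Open Scope ring_scope.
Set Implicit Arguments. Unset Strict Implicit.

Section Lat.
Variables (R : realType) (V : completeNormedModType R).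
Variables (le : V -> V -> Prop) (join : V -> V -> V).
Hypothesis HBL : banach_lattice le join.

Let HV : vector_lattice le join := HBL.1.
Let Hn : forall x y, le (labs join x) (labs join y) -> `|x| <= `|y| := HBL.2.

Lemma lrefl x : le x x. Proof. by case: HV => [[hr _]] *; apply: hr. Qed.
Lemma lanti x y : le x y -> le y x -> x = y. Proof. by case: HV => [[_ ha]] *; apply: ha. Qed.
Lemma ltrans x y z : le x y -> le y z -> le x z. Proof. by case: HV => _ ht *; apply: ht; eassumption. Qed.
Lemma ladd x y z : le x y -> le (x + z) (y + z). Proof. by case: HV => _ _ h *; apply: h. Qed.
Lemma lscale (a : R) x y : 0 <= a -> le x y -> le (a *: x) (a *: y).
Proof. by case: HV => _ _ _ h *; apply: h. Qed.
Lemma jub1 x y : le x (join x y). Proof. by case: HV => _ _ _ _ /(_ x y) [h1 h2 h3]; auto. Qed.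
Lemma jub2 x y : le y (join x y). Proof. by case: HV => _ _ _ _ /(_ x y) [h1 h2 h3]; auto. Qed.
Lemma jlub x y z : le x z -> le y z -> le (join x y) z.
Proof. by case: HV => _ _ _ _ /(_ x y) [h1 h2 h3]; auto. Qed.

Lemma laddl x y z : le x y -> le (z + x) (z + y).
Proof. by move=> h; rewrite ![z + _]addrC; apply: ladd. Qed.
Lemma ladd_inv x y z : le (x + z) (y + z) -> le x y.
Proof. by move=> /(@ladd _ _ (-z)); rewrite !addrK. Qed.
Lemma lsub0 x y : le x y -> le 0 (y - x).
Proof. by move=> /(@ladd _ _ (-x)); rewrite subrr. Qed.
Lemma l0sub x y : le 0 (y - x) -> le x y.
Proof. by move=> /(@ladd _ _ x); rewrite add0r subrK. Qed.
Lemma lopp x y : le x y -> le (- y) (- x).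
Proof.
move=> /(@ladd _ _ (- x - y)).
have -> : x + (- x - y) = - y by rewrite addrA subrr add0r.
by have -> : y + (- x - y) = - x by rewrite addrC -addrA addNr addr0.
Qed.
Lemma lopp_inv x y : le (- y) (- x) -> le x y.
Proof. by move=> /lopp; rewrite !opprK. Qed.
Lemma ladd2 a b c d : le a b -> le c d -> le (a + c) (b + d).
Proof. move=> h1 h2; apply: ltrans (@ladd _ _ c h1) _; exact: laddl. Qed.
Lemma lpos_add a b : le 0 a -> le 0 b -> le 0 (a + b).
Proof. by move=> h1 h2; rewrite -[0]addr0; apply: ladd2. Qed.
Lemma lscale0 (a : R) x : 0 <= a -> le 0 x -> le 0 (a *: x).
Proof. by move=> ha hx; rewrite -(scaler0 _ a); apply: lscale. Qed.
Lemma lle_add_pos a b : le 0 b -> le a (a + b).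
Proof. by move=> h; rewrite -{1}[a]addr0; apply: laddl. Qed.

Lemma jmono a b c : le a b -> le (join a c) (join b c).
Proof. move=> h; apply: jlub; [exact: ltrans h (jub1 _ _)|exact: jub2]. Qed.
Lemma jcomm a b : join a b = join b a.
Proof. by apply: lanti; apply: jlub; (apply: jub1 || apply: jub2). Qed.
Lemma jtransl x y z : join (x + z) (y + z) = join x y + z.
Proof.
apply: lanti.
  by apply: jlub; apply: ladd; [apply: jub1|apply: jub2].
apply: (@ladd_inv _ _ (-z)); rewrite addrK; apply: jlub.
  by apply: (@ladd_inv _ _ z); rewrite subrK; apply: jub1.
by apply: (@ladd_inv _ _ z); rewrite subrK; apply: jub2.
Qed.
Lemma jeq a b : le b a -> join a b = a.
Proof. by move=> h; apply: lanti; [apply: jlub => //; apply: lrefl|apply: jub1]. Qed.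

Local Notation lab := (labs join).

Lemma lab_ub x : le x (lab x). Proof. exact: jub1. Qed.
Lemma lab_ubN x : le (- x) (lab x). Proof. exact: jub2. Qed.
Lemma lab_lub x z : le x z -> le (- x) z -> le (lab x) z. Proof. exact: jlub. Qed.
Lemma lab_ge0 x : le 0 (lab x).
Proof.
have h1 := lsub0 (lab_ub x); have h2 := lsub0 (lab_ubN x).
rewrite opprK in h2.
have := lpos_add h1 h2.
have -> : lab x - x + (lab x + x) = (2:R) *: lab x by rewrite addrCA subrK scaler_nat mulr2n.
move=> h; have := lscale0 (a := 2^-1) (ltW _) h; rewrite scalerA mulVf ?scale1r //.
by apply; rewrite invr_gt0.
Qed.
Lemma lab_pos x : le 0 x -> lab x = x.
Proof.
move=> h; apply: jeq; apply: ltrans (lopp h) _; rewrite oppr0; exact: h.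
Qed.
Lemma lab0 : lab 0 = 0. Proof. exact/lab_pos/lrefl. Qed.
Lemma lab_opp x : lab (- x) = lab x.
Proof. by rewrite /lab /labs opprK jcomm. Qed.
Lemma norm_lab x : `|lab x| = `|x|.
Proof.
have e : lab (lab x) = lab x by apply/lab_pos/lab_ge0.
apply/eqP; rewrite eq_le; apply/andP; split; apply: Hn; rewrite e; exact: lrefl.
Qed.
Lemma lab_eq0 x : lab x = 0 -> x = 0.
Proof.
move=> h; apply/eqP; rewrite -normr_eq0 eq_le normr_ge0 andbT.
by rewrite -(normr0 V); apply: Hn; rewrite h lab0; apply: lrefl.
Qed.
Lemma norm_mono a b : le 0 a -> le a b -> `|a| <= `|b|.
Proof.
move=> ha hab; apply: Hn; rewrite lab_pos // lab_pos //; exact: ltrans hab.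
Qed.
Lemma norm_labmono a b : le (lab a) b -> `|a| <= `|b|.
Proof. move=> h; rewrite -norm_lab; apply: norm_mono h; exact: lab_ge0. Qed.
Lemma lab_tri x y : le (lab (x + y)) (lab x + lab y).
Proof.
apply: lab_lub; first by apply: ladd2; apply: lab_ub.
by rewrite opprD; apply: ladd2; apply: lab_ubN.
Qed.
Lemma lab_scale (r : R) x : le (lab (r *: x)) (`|r| *: lab x).
Proof.
have [r0|r0] := leP 0 r.
  rewrite ger0_norm //; apply: lab_lub; first by apply: lscale => //; apply: lab_ub.
  by rewrite -scalerN; apply: lscale => //; apply: lab_ubN.
rewrite ltr0_norm //; apply: lab_lub.
  have -> : r *: x = (- r) *: (- x) by rewrite scalerN scaleNr opprK.
  by apply: lscale; [rewrite oppr_ge0 ltW|apply: lab_ubN].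
by rewrite -scaleNr; apply: lscale; [rewrite oppr_ge0 ltW|apply: lab_ub].
Qed.

Lemma jlip_half a b c d : le (join a b - join c d) (lab (a - c) + lab (b - d)).
Proof.
apply: (@ladd_inv _ _ (join c d)); rewrite subrK; apply: jlub.
  apply: ltrans (_ : le a (lab (a - c) + join c d)) _.
    have : le ((a - c) + c) (lab (a - c) + join c d) by apply: ladd2; [apply: lab_ub|apply: jub1].
    by rewrite subrK.
  by rewrite addrAC; apply: lle_add_pos; apply: lab_ge0.
apply: ltrans (_ : le b (lab (b - d) + join c d)) _.
  have : le ((b - d) + d) (lab (b - d) + join c d) by apply: ladd2; [apply: lab_ub|apply: jub2].
  by rewrite subrK.
by rewrite -addrA addrC; apply: lle_add_pos; apply: lab_ge0.
Qed.
Lemma jlip a b c d : le (lab (join a b - join c d)) (lab (a - c) + lab (b - d)).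
Proof.
apply: lab_lub; first exact: jlip_half.
rewrite opprB -(lab_opp (a - c)) -(lab_opp (b - d)) !opprB; exact: jlip_half.
Qed.
Lemma norm_jlip a b c d : `|join a b - join c d| <= `|a - c| + `|b - d|.
Proof.
apply: le_trans (norm_labmono (jlip _ _ _ _)) _.
apply: le_trans (ler_normD _ _) _; by rewrite !norm_lab.
Qed.

Lemma norm_small (x : V) : (forall e : R, 0 < e -> `|x| <= e) -> x = 0.
Proof.
move=> h; apply/eqP; rewrite -normr_eq0; apply/negPn/negP => nz.
have hp : 0 < `|x| by rewrite normr_gt0 -normr_eq0.
have := h (`|x| / 2) (divr_gt0 hp (ltr0Sn _ 1)).
move=> H; lra.
Qed.

Definition lneg x := join (- x) 0.
Definition lposp x := join x 0.
Lemma pos_neg x : lposp x - lneg x = x.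
Proof.
apply/eqP; rewrite subr_eq addrC -subr_eq; apply/eqP.
by rewrite /lposp -jtransl subrr add0r jcomm.
Qed.

Lemma cone_closed w : (forall e : R, 0 < e -> exists w', le 0 w' /\ `|w - w'| <= e) -> le 0 w.
Proof.
move=> h.
have n0 : lneg w = 0.
  apply: norm_small => e e0; have [w' [hw' hd]] := h e e0.
  have nw' : lneg w' = 0 by rewrite /lneg jcomm; apply: jeq; have := lopp hw'; rewrite oppr0.
  rewrite -[lneg w]subr0 -nw'; apply: le_trans (norm_jlip _ _ _ _) _.
  by rewrite subrr normr0 addr0 -opprD normrN.
by rewrite -(pos_neg w) n0 subr0; apply: jub2.
Qed.


Section Proj.
Variable P : {linear V -> V}.
Hypothesis HP : projection P.
Hypothesis HS : strictly_positive le P.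

Lemma Ppos x : le 0 x -> le 0 (P x).
Proof.
move=> h; case: (pselect (x = 0)) => [->|nz]; first by rewrite linear0; apply: lrefl.
by have [] := HS (conj h nz).
Qed.
Lemma Pmono x y : le x y -> le (P x) (P y).
Proof. by move=> /lsub0/Ppos; rewrite linearB => /l0sub. Qed.
Lemma Plab x : le (lab (P x)) (P (lab x)).
Proof.
apply: lab_lub; first exact/Pmono/lab_ub.
by rewrite -linearN; apply/Pmono/lab_ubN.
Qed.
Lemma Pfix_ge z : le z (P z) -> P z = z.
Proof.
move=> h; apply/subr0_eq; case: (pselect (P z - z = 0)) => // nz.
have [_] := HS (conj (lsub0 h) nz).
by rewrite linearB HP subrr.
Qed.

Lemma Pbound_pos : exists C : R, 0 < C /\ forall x, le 0 x -> `|P x| <= C * `|x|.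
Proof.
case: (pselect (exists C : R, 0 < C /\ forall x, le 0 x -> `|P x| <= C * `|x|)) => // H.
exfalso.
have H' : forall n : nat, exists z, [/\ le 0 z, `|z| <= (2^-1) ^+ n & n%:R <= `|P z|].
  move=> n; case: (pselect (exists z, [/\ le 0 z, `|z| <= (2^-1) ^+ n & n%:R <= `|P z|])) => // Hz.
  exfalso; apply: H; exists (n.+1%:R * 2 ^+ n); split.
    by rewrite mulr_gt0 // exprn_gt0.
  move=> x x0; rewrite leNgt; apply/negP => hlt.
  have nx : x != 0.
    apply/eqP => x00; move: hlt; rewrite x00 linear0 !normr0 mulr0 ltxx //.
  have nxp : 0 < `|x| by rewrite normr_gt0.
  have kp : 0 < 2 ^+ n * `|x| :> R by rewrite mulr_gt0 // exprn_gt0.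
  apply: Hz; exists ((2 ^+ n * `|x|)^-1 *: x); split.
  - by apply: lscale0 => //; rewrite ltW // invr_gt0.
  - rewrite normrZ ger0_norm ?invr_ge0 ?(ltW kp) // exprVn invfM -mulrA mulVf ?mulr1 //.
    by rewrite gt_eqF.
  - rewrite linearZ normrZ ger0_norm ?invr_ge0 ?(ltW kp) //.
    rewrite ler_pdivlMl //.
    apply: le_trans (ltW hlt).
    have -> : n.+1%:R * 2 ^+ n * `|x| = 2 ^+ n * `|x| * n.+1%:R :> R by ring.
    by rewrite ler_wpM2l ?(ltW kp) // ler_nat.
have [z Hz] := choice H'.
have hcv : cvgn (series (fun n => `|z n|)).
  apply: (@series_le_cvg _ _ (geometric 1 (2^-1))).
  - by move=> n.
  - by move=> n; rewrite /geometric /= mul1r exprn_ge0.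
  - by move=> n; rewrite /geometric /= mul1r; case: (Hz n).
  - by apply: is_cvg_geometric_series; rewrite ger0_norm // invf_lt1 // ltr1n.
have cs : cvgn (series z) by apply: normed_cvg; exact: hcv.
set s := limn (series z).
have ps : forall m, le 0 (series z m).
  elim=> [|m IH]; first by rewrite /series /= big_geq //; apply: lrefl.
  by rewrite seriesSr; apply: lpos_add => //; case: (Hz m).
have zs : forall n m, (n < m)%N -> le (z n) (series z m).
  move=> n; elim=> [//|m IH]; rewrite ltnS leq_eqVlt => /orP[/eqP->|/IH h].
    by rewrite seriesSr addrC; apply: lle_add_pos.
  by rewrite seriesSr; apply: ltrans (lle_add_pos _ _) => //; case: (Hz m).
have zle : forall n, le (z n) s.
  move=> n; apply: l0sub; apply: cone_closed => e e0.
  move/cvgrPdist_le: cs => /(_ e e0) [N _ HN].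
  exists (series z (maxn N n.+1) - z n); split.
    by apply: lsub0; apply: zs; rewrite leq_max ltnSn orbT.
  by rewrite opprB addrA subrK; apply: HN; rewrite /= leq_maxl.
have big : forall n : nat, n%:R <= `|P s|.
  move=> n; case: (Hz n) => z0 _ hn; apply: le_trans hn _.
  by apply: norm_mono; [apply: Ppos | apply: Pmono].
have := big (Num.Def.trunc `|P s|).+1.
by rewrite leNgt truncnS_gt.
Qed.


Lemma Pbound : exists C : R, 0 < C /\ forall x, `|P x| <= C * `|x|.
Proof.
have [C [C0 HC]] := Pbound_pos; exists C; split => // x.
apply: le_trans (norm_labmono (Plab x)) _.
by rewrite -(norm_lab x); apply: HC; apply: lab_ge0.
Qed.

Section Ideal.
Variable q : V.
Definition Dq a := le q (lposp (q - a)).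
Lemma Dmono a b : le a b -> Dq b -> Dq a.
Proof.
move=> h hb; apply: ltrans hb _; apply: jmono; apply: laddl; exact: lopp.
Qed.
Lemma Dadd a b : le 0 b -> Dq a -> Dq b -> Dq (a + b).
Proof.
move=> b0 ha hb.
have h1 : le (q - b) (lposp (q - (a + b))).
  apply: ltrans (_ : le (lposp (q - a) - b) _); first exact: ladd.
  rewrite /lposp -jtransl add0r opprD addrA jcomm [X in le _ X]jcomm.
  apply: jmono; have := lopp b0; rewrite oppr0; exact.
apply: ltrans hb _; apply: jlub => //; exact: jub2.
Qed.
Lemma D0 : Dq 0.
Proof. by rewrite /Dq subr0; apply: jub1. Qed.
Lemma Dnat a : le 0 a -> Dq a -> forall n, Dq (a *+ n).
Proof.
move=> a0 ha; elim=> [|n IH]; first exact: D0.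
rewrite mulrS; apply: Dadd => //.
by rewrite -scaler_nat; apply: lscale0.
Qed.

Definition Kq := [set x | Dq (P (lab x))].

Lemma Kq_ideal : lattice_ideal le join Kq.
Proof.
split.
- by rewrite /Kq /= lab0 linear0; apply: D0.
- move=> x y hx hy; rewrite /Kq /=.
  apply: Dmono (Pmono (lab_tri x y)) _; rewrite linearD.
  by apply: Dadd => //; apply/Ppos/lab_ge0.
- move=> r x hx; rewrite /Kq /=.
  set n := (Num.Def.trunc `|r|).+1.
  apply: Dmono (Pmono (lab_scale r x)) _.
  apply: Dmono (_ : le _ (P (lab x) *+ n)) _.
    rewrite linearZ -scaler_nat; apply: l0sub; rewrite -scalerBl; apply: lscale0.
      by rewrite subr_ge0 ltW // truncnS_gt.
    exact/Ppos/lab_ge0.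
  by apply: Dnat => //; apply/Ppos/lab_ge0.
- move=> x y hx hyx; rewrite /Kq /=; exact: Dmono (Pmono hyx) hx.
Qed.

Lemma Kq_inv : P @` Kq `<=` Kq.
Proof.
move=> _ [x hx <-]; rewrite /Kq /=.
by apply: Dmono (Pmono (Plab x)) _; rewrite HP.
Qed.

Lemma Kq_closed : closed Kq.
Proof.
have [C [C0 HC]] := Pbound.
move=> x hx; rewrite /Kq /Dq /=; apply: l0sub; apply: cone_closed => e e0.
have e1 : 0 < e / (2 * C) by rewrite divr_gt0 // mulr_gt0.
have [x' [hx' bx']] := hx _ (nbhsx_ballx x _ e1).
exists (lposp (q - P (lab x')) - q); split; first exact: lsub0.
rewrite opprB addrA subrK; apply: le_trans (norm_jlip _ _ _ _) _.
rewrite subrr normr0 addr0 opprB addrC addrA subrK -linearB.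
apply: le_trans (HC _) _.
have : `|lab x' - lab x| <= 2 * `|x - x'|.
  apply: le_trans (norm_jlip _ _ _ _) _.
  rewrite opprK (addrC (- x')) (distrC x'); lra.
move: bx'; rewrite -ball_normE /ball_ /= => hb hl.
have : `|x - x'| <= e / (2 * C) by apply: ltW.
move=> hb'.
have := ler_wpM2l (ltW C0) hl.
move=> h; apply: le_trans h _.
have : C * (2 * `|x - x'|) <= C * (2 * (e / (2 * C))).
  by rewrite ler_pM2l // ler_pM2l.
move=> h; apply: le_trans h _.
by rewrite le_eqVlt; apply/orP; left; apply/eqP; field; rewrite gt_eqF.
Qed.

End Ideal.

Lemma main_sec (x0 : V) : x0 <> 0 ->
  (forall J : set V, lattice_ideal le join J -> closed J -> P @` J `<=` J ->
     J = [set 0] \/ J = [set: V]) ->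
  rank_one P.
Proof.
move=> nx0 Hirr.
set u := P (lab x0).
have u0 : le 0 u by apply/Ppos/lab_ge0.
have unz : u <> 0.
  by have [_] := HS (conj (lab_ge0 x0) (fun h => nx0 (lab_eq0 h))).
have Pu : P u = u by rewrite /u HP.
have unorm : 0 < `|u| by rewrite normr_gt0; apply/eqP.
exists u; split => //; apply/seteqP; split; last first.
  by move=> _ [a _ <-]; exists (a *: u) => //; rewrite linearZ Pu.
move=> _ [z _ <-]; set v := P z.
have Pv : P v = v by rewrite /v HP.
have split_or : forall t : R, le (v - t *: u) 0 \/ le 0 (v - t *: u).
  move=> t; set y := v - t *: u.
  have Py : P y = y by rewrite /y linearB linearZ Pv Pu.
  case: (pselect (lposp y = 0)) => [hp|hp].
    by left; rewrite -hp; exact: jub1.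
  case: (pselect (lneg y = 0)) => [hn|hn].
    by right; rewrite -(pos_neg y) hn subr0; exact: jub2.
  exfalso.
  have p0 : le 0 (lposp y) by exact: jub2.
  have q0 : le 0 (lneg y) by exact: jub2.
  have Pp : P (lposp y) = lposp y.
    apply: Pfix_ge; apply: jlub; last exact: Ppos.
    by rewrite -{1}Py; apply: Pmono; apply: jub1.
  have Pq : P (lneg y) = lneg y.
    apply: Pfix_ge; apply: jlub; last exact: Ppos.
    by rewrite -{1}Py -linearN; apply: Pmono; apply: jub1.
  have Kp : Kq (lneg y) (lposp y).
    rewrite /Kq /Dq /= lab_pos // Pp.
    have -> : lneg y - lposp y = - y by rewrite -{3}(pos_neg y) opprB.
    exact: lrefl.
  have Kqn : ~ Kq (lneg y) (lneg y).
    rewrite /Kq /Dq /= lab_pos // Pq subrr /lposp jeq; last exact: lrefl.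
    by move=> h; apply: hn; apply: lanti.
  case: (Hirr _ (Kq_ideal (lneg y)) (@Kq_closed (lneg y)) (@Kq_inv (lneg y))) => hK.
    by apply: hp; move: Kp; rewrite hK.
  by apply: Kqn; rewrite hK.
set A := [set t : R | le (t *: u) v].
have Amono : forall s t, s <= t -> le (s *: u) (t *: u).
  move=> s t st; apply: l0sub; rewrite -scalerBl; apply: lscale0 => //.
  by rewrite subr_ge0.
have Aub : ubound A (`|v| / `|u|).
  move=> t At; case: (leP t 0) => t0.
    by apply: le_trans t0 _; apply: divr_ge0.
  rewrite ler_pdivlMr //.
  by have := norm_mono (lscale0 (ltW t0) u0) At; rewrite normrZ gtr0_norm.
have Ane : A !=set0.
  exists (- (`|v| / `|u|) - 1).
  case: (split_or (- (`|v| / `|u|) - 1)) => h; last exact: l0sub.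
  exfalso.
  have hb : 0 <= `|v| / `|u| by apply: divr_ge0.
  have tn : 0 <= - (- (`|v| / `|u|) - 1) by lra.
  have h2 : le v ((- (`|v| / `|u|) - 1) *: u).
    by have := @ladd _ _ ((- (`|v| / `|u|) - 1) *: u) h; rewrite subrK add0r.
  have h3 := lopp h2; rewrite -scaleNr in h3.
  have := norm_mono (lscale0 tn u0) h3; rewrite normrZ (normrN v) ger0_norm //.
  rewrite -ler_pdivlMr //; lra.
have hsup : has_sup A by split => //; exists (`|v| / `|u|).
set t0 := sup A.
have lo : forall e, 0 < e -> le ((t0 - e) *: u) v.
  move=> e e0; have [a Aa ha] := sup_adherent e0 hsup.
  by apply: ltrans Aa; apply: Amono; exact: ltW.
have hi : forall e, 0 < e -> le v ((t0 + e) *: u).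
  move=> e e0; case: (split_or (t0 + e)) => h.
    by have := @ladd _ _ ((t0 + e) *: u) h; rewrite subrK add0r.
  exfalso; have := sup_upper_bound hsup (l0sub h).
  rewrite /t0 => h'; have : t0 + e <= t0 by []; lra.
exists t0 => //.
apply/eqP; rewrite eq_sym -subr_eq0; apply/eqP; apply: norm_small => e e0.
have e1 : 0 < e / `|u| by apply: divr_gt0.
have hl : le (lab (v - t0 *: u)) ((e / `|u|) *: u).
  apply: lab_lub.
    have := hi _ e1; rewrite scalerDl => h.
    apply: (@ladd_inv _ _ (t0 *: u)); rewrite subrK addrC; exact: h.
  have := lo _ e1; rewrite scalerBl => h.
  have := @ladd _ _ ((e / `|u|) *: u - v) h.
  have -> : t0 *: u - (e / `|u|) *: u + ((e / `|u|) *: u - v) = - (v - t0 *: u).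
    by rewrite addrA subrK opprB.
  by rewrite (addrC v ((e / `|u|) *: u - v)) subrK.
have := norm_labmono hl; rewrite normrZ gtr0_norm // mulfVK //.
by rewrite gt_eqF.
Qed.

End Proj.
End Lat.

Theorem lemma2p4 (R : realType) (V : completeNormedModType R)
  (le : V -> V -> Prop) (join : V -> V -> V) (P : {linear V -> V}) :
  banach_lattice le join ->
  (exists x : V, x <> 0) ->
  projection P ->
  strictly_positive le P ->
  (forall J : set V, lattice_ideal le join J -> closed J -> P @` J `<=` J ->
     J = [set 0] \/ J = [set: V]) ->
  rank_one P.
Proof.
move=> HBL [x0 nx0] HP HS Hirr.
exact: (main_sec HBL HP HS nx0 Hirr).
Qed.
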